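(* Let $m\ge1$. For $q\in[0,1/m]$ let $G(m,q)=(1-(m-1)q)\,H\!\left(\frac{q}{1-(m-1)q}\right)$, where $H(x)=-x\log_2x-(1-x)\log_2(1-x)$ is the binary entropy function (with $H(0)=H(1)=0$). For $n\ge1$ and $q$ let $\mathcal T_n^{(q)}=\{\mathbf s\in\mathcal S_n:\ \#\{k:s_k=-\}=nq\}$. Then there is a sequence $\epsilon_m(n)$ with $\epsilon_m(n)\to0$ as $n\to\infty$, not depending on $q$, such that for all $n\ge1$ and all $q\in[0,1/m]$ with $nq\in\mathbb Z$, $$|\mathcal T_n^{(q)}|<2^{\,n\,(G(m,q)+\epsilon_m(n))}.$$
   Context: Fix an integer $m\ge1$. Define integers $N(n)$ by $N(n)=1$ for $1-m\le n\le 0$ and $N(n)=N(n-1)+N(n-m)$ for $n\ge1$; write $\mathbb N_n=\{1,\dots,N(n)\}$ (so $\mathbb N_n=\{1\}$ for $n\le 0$, and $\mathbb N_{n-m}\subseteq\mathbb N_{n-1}$). Define vectors $\mathbf s_n^{(i)}\in\{+,-,\bigstar\}^n$ for $n\ge0$, $i\in\mathbb N_n$, recursively: $\mathbf s_0^{(1)}$ is the empty vector, and for $n\ge1$: $\mathbf s_n^{(j)}=(\mathbf s_{n-1}^{(j)},+)$ and $\mathbf s_n^{(j+N(n-1))}=(\mathbf s_{n-1}^{(j)},-)$ for $j\in\mathbb N_{n-m}$, while $\mathbf s_n^{(j)}=(\mathbf s_{n-1}^{(j)},\bigstar)$ for $j\in\mathbb N_{n-1}\setminus\mathbb N_{n-m}$.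 Let $\mathcal S_n=\{\mathbf s_n^{(i)}:i\in\mathbb N_n\}$ for $n\ge1$. *)

(* Defs.v *)
From Stdlib Require Import Reals Lra Lia Arith List.
Import ListNotations.
Open Scope R_scope.

Inductive sgn : Set := Plus | Minus | Star.

Definition sgn_eq_dec : forall x y : sgn, {x = y} + {x <> y}.
Proof. decide equality. Defined.

Definition vec_eq_dec : forall x y : list sgn, {x = y} + {x <> y} :=
  list_eq_dec sgn_eq_dec.

(* Ntab m n = [N(0); N(1); ...; N(n)], with N(n) = 1 for 1-m <= n <= 0 and
   N(n) = N(n-1) + N(n-m).  Since N(k) = 1 for all k <= 0, the value N(n-m)
   can be read with truncated natural subtraction: N(n - m) = N(max(n-m,0)). *)
Fixpoint Ntab (m n : nat) : list nat :=
  match n with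
  | O => [1%nat]
  | S k => let t := Ntab m k in
           t ++ [(nth k t 1 + nth (S k - m) t 1)%nat]
  end.

Definition Nf (m n : nat) : nat := nth n (Ntab m n) 1%nat.

(* Slist m n = [s_n^(1); ...; s_n^(N(n))] (vectors as lists of length n,
   entry k of the list is s_k, 0-based). *)
Fixpoint Slist (m n : nat) : list (list sgn) :=
  match n with
  | O => [[]]
  | S k =>
      let prev := Slist m k in
      let bound := Nf m (S k - m) in
      map (fun p : nat * list sgn =>
             if (fst p <=? bound)%nat then snd p ++ [Plus] else snd p ++ [Star])
          (combine (seq 1 (length prev)) prev)
      ++ map (fun v => v ++ [Minus]) (firstn bound prev)
  end.

(* |T_n^(q)| where nq = k : the number of distinct s in S_n with exactly k
   entries equal to -. *)
Definition Tcard (m n k : nat) : nat :=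
  length (nodup vec_eq_dec
    (filter (fun s => Nat.eqb (count_occ sgn_eq_dec s Minus) k) (Slist m n))).

Definition xlog2x (x : R) : R :=
  if Req_EM_T x 0 then 0 else x * (ln x / ln 2).

Definition Hb (x : R) : R := - xlog2x x - xlog2x (1 - x).

Definition Gmq (m : nat) (q : R) : R :=
  (1 - (INR m - 1) * q) * Hb (q / (1 - (INR m - 1) * q)).

(* Main.v *)
Require Import Defs.
From Stdlib Require Import Reals List Lia Arith Lra.
Import ListNotations.
Open Scope R_scope.

Definition cm (s : list sgn) : nat := count_occ sgn_eq_dec s Minus.
Definition cnt (m n : nat) : list nat := map cm (Slist m n).

Lemma cm_app1 l x : x <> Minus -> cm (l ++ [x]) = cm l.
Proof. intros H. unfold cm. rewrite count_occ_app. simpl.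
  destruct (sgn_eq_dec x Minus); [congruence|lia]. Qed.

Lemma cm_appM l : cm (l ++ [Minus]) = S (cm l).
Proof. unfold cm. rewrite count_occ_app. simpl. lia. Qed.

Lemma map_comb (b : nat) (l : list (list sgn)) st :
  map cm (map (fun p : nat * list sgn =>
             if (fst p <=? b)%nat then snd p ++ [Plus] else snd p ++ [Star])
          (combine (seq st (length l)) l)) = map cm l.
Proof.
  revert st; induction l as [|x l IH]; intros st; simpl; auto.
  rewrite IH. f_equal. destruct (st <=? b)%nat; apply cm_app1; discriminate.
Qed.

Lemma cnt_S m n : cnt m (S n) = cnt m n ++ map S (firstn (Nf m (S n - m)) (cnt m n)).
Proof.
  unfold cnt. cbn [Slist]. rewrite map_app, map_comb. f_equal.
  rewrite firstn_map, !map_map. apply map_ext. intros; apply cm_appM.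
Qed.

Lemma Ntab_len m n : length (Ntab m n) = S n.
Proof. induction n; simpl; auto. rewrite length_app, IHn; simpl; lia. Qed.

Lemma Ntab_nth m n j : (j <= n)%nat -> nth j (Ntab m n) 1%nat = Nf m j.
Proof.
  induction n; intros H.
  - assert (j = 0%nat) by lia; subst; reflexivity.
  - destruct (Nat.eq_dec j (S n)). subst; reflexivity.
    cbn [Ntab]. rewrite app_nth1 by (rewrite Ntab_len; lia). apply IHn; lia.
Qed.

Lemma Nf_S m n : (1 <= m)%nat -> Nf m (S n) = (Nf m n + Nf m (S n - m))%nat.
Proof.
  intros hm. unfold Nf at 1. cbn [Ntab]. rewrite app_nth2 by (rewrite Ntab_len; lia).
  rewrite Ntab_len, Nat.sub_diag. cbn [nth]. rewrite !Ntab_nth by lia. reflexivity.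
Qed.

Lemma Nf_mono m a b : (1 <= m)%nat -> (a <= b)%nat -> (Nf m a <= Nf m b)%nat.
Proof. intros hm H; induction H; auto. rewrite Nf_S by auto. lia. Qed.

Lemma cnt_len m n : (1 <= m)%nat -> length (cnt m n) = Nf m n.
Proof.
  intros hm; induction n. reflexivity.
  rewrite cnt_S, length_app, length_map, length_firstn, IHn, Nf_S by auto.
  rewrite Nat.min_l; auto. apply Nf_mono; lia.
Qed.

Lemma cnt_prefix m j n : (j <= n)%nat -> exists r, cnt m n = cnt m j ++ r.
Proof.
  intros H; induction H. exists []; rewrite app_nil_r; auto.
  destruct IHle as [r Hr]. rewrite cnt_S, Hr. eexists; rewrite <- app_assoc; eauto.
Qed.

Lemma cnt_firstn m j n : (1 <= m)%nat -> (j <= n)%nat -> firstn (Nf m j) (cnt m n) = cnt m j.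
Proof.
  intros hm H. destruct (cnt_prefix m j n H) as [r ->].
  rewrite <- (cnt_len m j hm). rewrite firstn_app, Nat.sub_diag, firstn_O, app_nil_r.
  apply firstn_all.
Qed.

Definition cc m n k := count_occ Nat.eq_dec (cnt m n) k.

Lemma count_mapS0 l : count_occ Nat.eq_dec (map S l) 0%nat = 0%nat.
Proof. induction l; simpl; auto. Qed.
Lemma count_mapS l k : count_occ Nat.eq_dec (map S l) (S k) = count_occ Nat.eq_dec l k.
Proof. induction l; simpl; auto. rewrite IHl. destruct (Nat.eq_dec a k), (Nat.eq_dec (S a) (S k)); lia. Qed.

Lemma cc_S0 m n : (1 <= m)%nat -> cc m (S n) 0 = cc m n 0.
Proof. intros; unfold cc. rewrite cnt_S, count_occ_app, count_mapS0. lia. Qed.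
Lemma cc_SS m n k : (1 <= m)%nat -> cc m (S n) (S k) = (cc m n (S k) + cc m (S n - m) k)%nat.
Proof. intros; unfold cc. rewrite cnt_S, count_occ_app, count_mapS, cnt_firstn by (auto; lia). auto. Qed.
Lemma cc_0 m k : cc m 0 k = if Nat.eq_dec 0 k then 1%nat else 0%nat.
Proof. reflexivity. Qed.

Lemma Tcard_le m n k : (Tcard m n k <= cc m n k)%nat.
Proof.
  unfold Tcard, cc, cnt. etransitivity.
  - apply NoDup_incl_length. apply NoDup_nodup. intros x Hx; rewrite nodup_In in Hx; exact Hx.
  - generalize (Slist m n); induction l; simpl; auto.
    unfold cm at 1. destruct (Nat.eqb_spec (count_occ sgn_eq_dec a Minus) k);
    destruct (Nat.eq_dec (count_occ sgn_eq_dec a Minus) k); simpl; lia.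
Qed.
Open Scope nat_scope.

Fixpoint cb (n k : nat) : nat :=
  match n, k with
  | _, O => 1
  | O, S _ => 0
  | S n', S k' => cb n' k' + cb n' (S k')
  end.

Lemma cc_n0 m n : (1 <= m) -> cc m n 0 = 1.
Proof. intros hm; induction n. reflexivity. rewrite cc_S0; auto. Qed.

Lemma cc_0k m k : (1 <= k) -> cc m 0 k = 0.
Proof. intros; rewrite cc_0; destruct (Nat.eq_dec 0 k); lia. Qed.

Lemma cc_Z m n k : (1 <= m) -> (1 <= k) -> n + m <= m * k -> cc m n k = 0.
Proof.
  intros hm. revert k. induction n as [n IH] using lt_wf_ind. intros k hk H.
  destruct n. apply cc_0k; auto.
  destruct k as [|k']. lia.
  rewrite cc_SS by auto. rewrite IH by (auto; lia).
  assert (1 <= k') by nia.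
  destruct (Nat.eq_dec (S n - m) 0) as [E|E].
  - rewrite E, cc_0k; auto.
  - rewrite IH; auto; nia.
Qed.

Lemma cc_P m n k a : (1 <= m) -> n + m - 1 <= a + (m - 1) * k -> cc m n k <= cb a k.
Proof.
  intros hm. revert k a. induction n as [n IH] using lt_wf_ind. intros k a H.
  destruct k as [|k']. { rewrite cc_n0 by auto. destruct a; simpl; lia. }
  destruct a as [|a'].
  { rewrite cc_Z; auto; nia. }
  destruct n as [|n']. { rewrite cc_0k; lia. }
  rewrite cc_SS by auto. simpl cb.
  assert (cc m n' (S k') <= cb a' (S k')) by (apply IH; nia).
  assert (cc m (S n' - m) k' <= cb a' k'); [|lia].
  destruct k' as [|k''].
  { rewrite cc_n0 by auto. destruct a'; simpl; lia. }
  destruct (Nat.eq_dec (S n' - m) 0) as [E|E].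
  - rewrite E, cc_0k; lia.
  - apply IH; nia.
Qed.
Open Scope R_scope.

Lemma cb_big n k : (n < k)%nat -> cb n k = 0%nat.
Proof. revert k; induction n; intros k H; destruct k; simpl; try lia; auto.
  rewrite !IHn by lia. auto. Qed.

Lemma cb_C n k : (k <= n)%nat -> INR (cb n k) = Binomial.C n k.
Proof.
  revert k; induction n; intros k H.
  - assert (k = 0%nat) by lia; subst. unfold Binomial.C; simpl. lra.
  - destruct k. { unfold Binomial.C. rewrite Nat.sub_0_r. simpl cb. simpl (INR (fact 0)). simpl (INR 1). field. apply INR_fact_neq_0. }
    simpl cb. rewrite plus_INR. destruct (Nat.eq_dec k n).
    + subst. rewrite (cb_big n (S n)) by lia. rewrite IHn by lia. unfold Binomial.C. rewrite !Nat.sub_diag.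
      simpl (INR 0). simpl (INR (fact 0)). assert (INR (fact n) <> 0) by apply INR_fact_neq_0. assert (INR (fact (S n)) <> 0) by apply INR_fact_neq_0. field; auto.
    + rewrite !IHn by lia. apply pascal. lia.
Qed.

Lemma C_step x k : (k <= x)%nat -> Binomial.C (S x) k <= Binomial.C x k * INR (S x).
Proof.
  intros H. unfold Binomial.C. replace (S x - k)%nat with (S (x - k)) by lia.
  rewrite !fact_simpl, !mult_INR.
  assert (0 < INR (fact k)) by apply INR_fact_lt_0.
  assert (0 < INR (fact (x-k))) by apply INR_fact_lt_0.
  assert (0 < INR (fact x)) by apply INR_fact_lt_0.
  assert (1 <= INR (S (x - k))) by (apply (le_INR 1); lia).
  assert (0 < INR (S x)) by (apply lt_0_INR; lia).
  replace (INR (S x) * INR (fact x) / (INR (fact k) * (INR (S (x - k)) * INR (fact (x - k)))))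
    with (INR (fact x) / (INR (fact k) * INR (fact (x - k))) * INR (S x) * / INR (S (x-k))) by (field; lra).
  assert (0 <= INR (fact x) / (INR (fact k) * INR (fact (x - k)))).
  { apply Rle_mult_inv_pos; [lra| nra]. }
  rewrite <- (Rmult_1_r (INR (fact x) / (INR (fact k) * INR (fact (x - k))) * INR (S x))) at 2.
  apply Rmult_le_compat_l. nra.
  rewrite <- Rinv_1. apply Rinv_le_contravar; lra.
Qed.

Lemma C_nonneg x k : 0 <= Binomial.C x k.
Proof. unfold Binomial.C. apply Rle_mult_inv_pos. apply pos_INR.
  apply Rmult_lt_0_compat; apply INR_fact_lt_0. Qed.

Lemma C_shift M d k : (k <= M)%nat -> Binomial.C (M + d) k <= Binomial.C M k * INR (M + d) ^ d.
Proof.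
  intros H; induction d.
  - rewrite Nat.add_0_r; simpl; lra.
  - replace (M + S d)%nat with (S (M + d)) by lia.
    eapply Rle_trans. apply C_step; lia.
    eapply Rle_trans. apply Rmult_le_compat_r. apply pos_INR. apply IHd.
    replace (INR (S (M + d)) ^ S d) with (INR (S (M+d)) ^ d * INR (S (M+d))) by (rewrite <- tech_pow_Rmult; ring).
    rewrite (Rmult_assoc (C M k)). apply Rmult_le_compat_l. apply C_nonneg.
    apply Rmult_le_compat_r. apply pos_INR.
    apply pow_incr. split. apply pos_INR. apply le_INR; lia.
Qed.

Lemma sum_ge_term f N k : (forall i, 0 <= f i) -> (k <= N)%nat -> f k <= sum_f_R0 f N.
Proof.
  intros Hf H. induction N.
  - assert (k = 0%nat) by lia; subst; simpl; lra.
  - destruct (Nat.eq_dec k (S N)).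
    + subst. simpl. assert (0 <= sum_f_R0 f N). { clear -Hf. induction N; simpl; auto. specialize (Hf (S N)); lra. } lra.
    + simpl. specialize (Hf (S N)). assert (f k <= sum_f_R0 f N) by (apply IHN; lia). lra.
Qed.

Lemma binom_term M k p : (k <= M)%nat -> 0 <= p <= 1 ->
  Binomial.C M k * p ^ k * (1 - p) ^ (M - k) <= 1.
Proof.
  intros H Hp. replace 1 with ((p + (1 - p)) ^ M) at 2 by (replace (p + (1-p)) with 1 by ring; apply pow1).
  rewrite binomial. apply (sum_ge_term (fun i => Binomial.C M i * p ^ i * (1 - p) ^ (M - i))); auto.
  intros i. apply Rmult_le_pos; [apply Rmult_le_pos|]; try apply C_nonneg; apply pow_le; lra.
Qed.

Lemma xlog0 : xlog2x 0 = 0.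
Proof. unfold xlog2x; destruct (Req_EM_T 0 0); lra. Qed.
Lemma ln2_pos : 0 < ln 2.
Proof. pose proof ln_lt_2; lra. Qed.

Lemma xlog1 : xlog2x 1 = 0.
Proof. unfold xlog2x; destruct (Req_EM_T 1 0). lra. rewrite ln_1. pose proof ln2_pos. field. lra. Qed.

Lemma xlog_pos x : 0 < x -> xlog2x x * ln 2 = x * ln x.
Proof. intros. unfold xlog2x; destruct (Req_EM_T x 0). lra. pose proof ln2_pos. field. lra. Qed.

Lemma C_n0 M : Binomial.C M 0 = 1.
Proof. rewrite <- cb_C by lia. destruct M; reflexivity. Qed.

Lemma cb_nn n : cb n n = 1%nat.
Proof. induction n; simpl; auto. rewrite IHn, cb_big; auto. Qed.

Lemma C_nn M : Binomial.C M M = 1.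
Proof. rewrite <- cb_C by lia. rewrite cb_nn; reflexivity. Qed.

Lemma entropy_bound M k : (1 <= M)%nat -> (k <= M)%nat ->
  Binomial.C M k <= Rpower 2 (INR M * Hb (INR k / INR M)).
Proof.
  intros HM Hk. assert (0 < INR M) by (apply lt_0_INR; lia).
  destruct (Nat.eq_dec k 0) as [->|Hk0].
  { rewrite C_n0. simpl INR. unfold Rdiv. rewrite Rmult_0_l. unfold Hb.
    rewrite Rminus_0_r, xlog0, xlog1. replace (INR M * (- 0 - 0)) with 0 by ring.
    rewrite Rpower_O; lra. }
  destruct (Nat.eq_dec k M) as [->|HkM].
  { rewrite C_nn. unfold Rdiv. rewrite Rinv_r by lra. unfold Hb.
    rewrite Rminus_diag, xlog0, xlog1. replace (INR M * (- 0 - 0)) with 0 by ring.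
    rewrite Rpower_O; lra. }
  set (p := INR k / INR M).
  assert (0 < INR k) by (apply lt_0_INR; lia).
  assert (INR k < INR M) by (apply lt_INR; lia).
  assert (0 < p) by (unfold p; apply Rdiv_lt_0_compat; lra).
  assert (p < 1) by (unfold p; apply (Rmult_lt_reg_r (INR M)); auto; unfold Rdiv; rewrite Rmult_assoc, Rinv_l; lra).
  set (P := p ^ k * (1 - p) ^ (M - k)).
  assert (HP : 0 < P) by (unfold P; apply Rmult_lt_0_compat; apply pow_lt; lra).
  assert (Hb1 : Binomial.C M k * P <= 1).
  { unfold P; rewrite <- Rmult_assoc; apply binom_term; auto; lra. }
  assert (E : Rpower 2 (INR M * Hb p) = / P).
  { unfold Rpower. replace (INR M * Hb p * ln 2) with (- ln P).
    - rewrite exp_Ropp, exp_ln; auto.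
    - unfold Hb. replace (INR M * (- xlog2x p - xlog2x (1 - p)) * ln 2)
        with (- INR M * (xlog2x p * ln 2 + xlog2x (1-p) * ln 2)) by ring.
      rewrite !xlog_pos by lra. unfold P. rewrite ln_mult by (apply pow_lt; lra).
      rewrite !ln_pow by lra. rewrite minus_INR by lia.
      replace (INR k) with (INR M * p) at 1 by (unfold p; field; lra).
      replace (INR M - INR k) with (INR M * (1 - p)) by (unfold p; field; lra). ring. }
  rewrite E. apply (Rmult_le_reg_r P); auto. rewrite Rinv_l; lra.
Qed.
From Coquelicot Require Import Coquelicot.
Open Scope R_scope.

Lemma lim_aux (m : nat) (a b : R) : (1 <= m)%nat ->
  Un_cv (fun n => (a + b * ln (INR n + INR m)) / (INR n + INR m)) 0.
Proof.
  intros hm. apply is_lim_seq_Reals.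
  assert (Hinf : is_lim_seq (fun n => INR n + INR m) p_infty).
  { eapply is_lim_seq_plus. apply is_lim_seq_INR. apply is_lim_seq_const. simpl. reflexivity. }
  assert (H1 : is_lim_seq (fun n => / (INR n + INR m)) 0).
  { replace (Finite 0) with (Rbar_inv p_infty) by reflexivity. apply is_lim_seq_inv; auto. discriminate. }
  assert (H2 : is_lim_seq (fun n => ln (INR n + INR m) / (INR n + INR m)) 0).
  { unfold is_lim_seq. apply (filterlim_comp nat R R (fun n => INR n + INR m) (fun y => ln y / y) eventually (Rbar_locally p_infty) (Rbar_locally 0)). exact Hinf. apply is_lim_div_ln_p. }
  eapply is_lim_seq_ext with (fun n => a * / (INR n + INR m) + b * (ln (INR n + INR m) / (INR n + INR m))).
  - intros n. unfold Rdiv. ring.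
  - replace (Finite 0) with (Finite (a * 0 + b * 0)) by (f_equal; ring).
    apply is_lim_seq_plus'; [apply (is_lim_seq_scal_l _ a 0 H1) | apply (is_lim_seq_scal_l _ b 0 H2)].
Qed.

Theorem lemma3 (m : nat) (hm : (1 <= m)%nat) :
  exists eps : nat -> R,
    Un_cv eps 0 /\
    forall (n : nat), (1 <= n)%nat ->
    forall (q : R), 0 <= q <= 1 / INR m ->
    forall (k : nat), INR n * q = INR k ->
      INR (Tcard m n k) < Rpower 2 (INR n * (Gmq m q + eps n)).
Proof.
  pose proof ln2_pos as Hl2.
  set (a0 := INR (m + 1)). set (b0 := INR (m + 1) * INR (m - 1) / ln 2).
  exists (fun n => (a0 + b0 * ln (INR n + INR m)) / (INR n + INR m)).
  split. { apply lim_aux; auto. }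
  intros n hn q [hq0 hq1] k hk.
  assert (Hm : 1 <= INR m) by (apply (le_INR 1); lia).
  assert (Hn : 1 <= INR n) by (apply (le_INR 1); lia).
  assert (Hmk : (m * k <= n)%nat).
  { apply INR_le. rewrite mult_INR, <- hk.
    assert (INR m * q <= 1).
    { replace 1 with (INR m * (1 / INR m)) by (field; lra). apply Rmult_le_compat_l; lra. }
    nra. }
  assert (Hmk2 : ((m - 1) * k <= n)%nat) by (eapply Nat.le_trans; [apply Nat.mul_le_mono_r; apply Nat.le_sub_l|exact Hmk]).
  set (M := (n - (m - 1) * k)%nat).
  assert (HkM : (k <= M)%nat) by (unfold M; nia).
  assert (HM1 : (1 <= M)%nat) by (unfold M; nia).
  assert (HMr : INR M = INR n * (1 - (INR m - 1) * q)).
  { unfold M. rewrite minus_INR by nia. rewrite mult_INR, minus_INR by lia. simpl (INR 1).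
    rewrite <- hk. ring. }
  assert (HM0 : 0 < INR M) by (apply lt_0_INR; lia).
  assert (Hden : 1 - (INR m - 1) * q <> 0).
  { intro E0. rewrite E0 in HMr. lra. }
  assert (HG : INR n * Gmq m q = INR M * Hb (INR k / INR M)).
  { unfold Gmq. rewrite HMr. rewrite <- hk. replace (INR n * q / (INR n * (1 - (INR m - 1) * q)))
      with (q / (1 - (INR m - 1) * q)) by (field; split; lra). ring. }
  set (a := (M + (m - 1))%nat).
  assert (Ha : INR a <= INR n + INR m).
  { rewrite <- plus_INR. apply le_INR. unfold a, M. clear -Hmk2. set (x := ((m-1)*k)%nat) in *. lia. }
  assert (Hnm : 0 < INR n + INR m) by lra.
  assert (H1 : INR (Tcard m n k) <= Binomial.C M k * INR a ^ (m - 1)).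
  { eapply Rle_trans. apply le_INR. apply Tcard_le.
    eapply Rle_trans. apply le_INR. apply (cc_P m n k a hm). unfold a, M. nia.
    rewrite cb_C by (unfold a; lia). apply C_shift; auto. }
  assert (H2 : Binomial.C M k <= Rpower 2 (INR n * Gmq m q)).
  { rewrite HG. apply entropy_bound; auto. }
  assert (H3 : Rpower 2 (1 + INR (m - 1) * ln (INR n + INR m) / ln 2) = 2 * (INR n + INR m) ^ (m - 1)).
  { rewrite Rpower_plus, Rpower_1 by lra. f_equal.
    rewrite <- Rpower_pow by lra. unfold Rpower. f_equal. field. lra. }
  assert (H4 : 1 + INR (m - 1) * ln (INR n + INR m) / ln 2 <=
               INR n * ((a0 + b0 * ln (INR n + INR m)) / (INR n + INR m))).
  { assert (0 <= ln (INR n + INR m)).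
    { rewrite <- ln_1. apply Rcomplements.ln_le; lra. }
    assert (0 <= INR (m - 1)) by apply pos_INR.
    assert (0 <= INR (m - 1) * ln (INR n + INR m) / ln 2).
    { apply Rmult_le_pos. apply Rmult_le_pos; auto. left; apply Rinv_0_lt_compat; auto. }
    replace (INR n * ((a0 + b0 * ln (INR n + INR m)) / (INR n + INR m)))
      with ((1 + INR (m - 1) * ln (INR n + INR m) / ln 2) * (INR n * INR (m + 1) / (INR n + INR m)))
      by (unfold a0, b0; field; lra).
    rewrite <- (Rmult_1_r (1 + _)) at 1. apply Rmult_le_compat_l. lra.
    apply (Rmult_le_reg_r (INR n + INR m)); auto. unfold Rdiv. rewrite Rmult_assoc, Rinv_l by lra.
    rewrite plus_INR; simpl (INR 1). nra. }
  assert (H5 : 0 <= INR a ^ (m - 1)) by (apply pow_le; apply pos_INR).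
  assert (H6 : INR a ^ (m - 1) <= (INR n + INR m) ^ (m - 1)) by (apply pow_incr; split; [apply pos_INR|auto]).
  assert (H7 : 0 < (INR n + INR m) ^ (m - 1)) by (apply pow_lt; auto).
  assert (H8 : 0 < Rpower 2 (INR n * Gmq m q)) by (unfold Rpower; apply exp_pos).
  rewrite Rmult_plus_distr_l, Rpower_plus.
  eapply Rle_lt_trans. exact H1.
  eapply Rle_lt_trans. apply Rmult_le_compat_r; [exact H5| exact H2].
  apply Rmult_lt_compat_l; auto.
  eapply Rle_lt_trans. exact H6.
  eapply Rlt_le_trans. 2: { apply Rle_Rpower. lra. exact H4. }
  rewrite H3. lra.
Qed.
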